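(* For every concurrent game structure $G$, every $F\subseteq S$ and every $\varepsilon>0$, there exist $k>0$ and a $k$-uniform player-1 selector $\xi$ such that the memoryless strategy $\overline{\xi}$ is $\varepsilon$-optimal for $\mathrm{Safe}(F)$, i.e. $\inf_{\pi_2}\Pr_s^{\overline{\xi},\pi_2}(\mathrm{Safe}(F))\ge\mathrm{val}_1(\mathrm{Safe}(F))(s)-\varepsilon$ for all $s\in S$.
   Context: Concurrent game structure $G=(S,M,\Gamma_1,\Gamma_2,\delta)$: finite states $S$, finite moves $M$, nonempty move sets $\Gamma_i(s)\subseteq M$, $\delta(s,a_1,a_2)\in\mathrm{Distr}(S)$ (simultaneous independent moves). A selector for player 1 assigns to each state $s$ a distribution on $\Gamma_1(s)$; $\overline{\xi}$ is the memoryless strategy playing $\xi$ forever. Strategies map histories to distributions on available moves; $\Pr_s^{\pi_1,\pi_2}$ is the induced measure on plays from $s$. $\mathrm{Safe}(F)$: plays staying in $F$ forever; $\mathrm{val}_1(\mathrm{Safe}(F))(s)=\sup_{\pi_1}\inf_{\pi_2}\Pr_s^{\pi_1,\pi_2}(\mathrm{Safe}(F))$. Let $T=S\setminus F$ and $W_1=\{s:\mathrm{val}_1(\mathrm{Safe}(F))(s)=1\}$. A selector $\xi$ is $k$-uniform if for all $s\in S\setminus(T\cup W_1)$ and all moves $a$ in the support of $\xi(s)$ there are integers $0\le i\le j\le k$ with $\xi(s)(a)=i/j$. *)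

(* Defs.v *)
From HB Require Import structures.
From mathcomp Require Import all_boot all_order all_algebra.
From mathcomp Require Import classical_sets reals.
Set Implicit Arguments. Unset Strict Implicit. Unset Printing Implicit Defensive.
Import Order.TTheory GRing.Theory Num.Theory.
Local Open Scope ring_scope.


Section Games.
Variable R : realType.

Definition is_distr (T : finType) (A : {set T}) (p : T -> R) : Prop :=
  (forall t, 0 <= p t) /\ (forall t, t \notin A -> p t = 0) /\ \sum_(t : T) p t = 1.

Record cgs (S M : finType) := CGS {
  Gam1 : S -> {set M};
  Gam2 : S -> {set M};
  delta : S -> M -> M -> S -> R;
  Gam1_nonempty : forall s, Gam1 s != finset.set0;
  Gam2_nonempty : forall s, Gam2 s != finset.set0;
  delta_distr : forall s a1 a2, a1 \in Gam1 s -> a2 \in Gam2 s ->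
                  is_distr (finset.setTfor S) (delta s a1 a2)
}.

Variables (S M : finType) (G : cgs S M).

(* Histories are nonempty sequences of states, encoded as x :: xs;
   the current state is last x xs. A strategy maps histories to move
   distributions; only its values on nonempty histories matter. *)
Definition strategy1 (pi : seq S -> M -> R) : Prop :=
  forall x xs, is_distr (Gam1 G (last x xs)) (pi (x :: xs)).
Definition strategy2 (pi : seq S -> M -> R) : Prop :=
  forall x xs, is_distr (Gam2 G (last x xs)) (pi (x :: xs)).

Definition selector1 (xi : S -> M -> R) : Prop :=
  forall s, is_distr (Gam1 G s) (xi s).

Definition memoryless (xi : S -> M -> R) : seq S -> M -> R :=
  fun h => match h with [::] => fun _ => 0 | x :: xs => xi (last x xs) end.

(* Probability, from history x :: xs, that the current state and the next
   n states all lie in F. *)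
Fixpoint safeP (F : {set S}) (pi1 pi2 : seq S -> M -> R) (n : nat)
    (x : S) (xs : seq S) : R :=
  let c := last x xs in
  if c \in F then
    match n with
    | 0 => 1
    | n'.+1 => \sum_(a1 : M) \sum_(a2 : M) \sum_(t : S)
               pi1 (x :: xs) a1 * pi2 (x :: xs) a2 * delta G c a1 a2 t
               * safeP F pi1 pi2 n' x (rcons xs t)
    end
  else 0.

(* Pr_s^{pi1,pi2}(Safe(F)): by continuity from above of the play measure,
   the limit (= infimum, the sequence being nonincreasing) of the
   probabilities of staying in F for the first n steps. *)
Definition prob_safe (F : {set S}) (pi1 pi2 : seq S -> M -> R) (s : S) : R :=
  inf (range (fun n => safeP F pi1 pi2 n s [::])).

Definition val1_safe (F : {set S}) (s : S) : R :=
  sup [set v | exists2 pi1, strategy1 pi1 &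
         v = inf [set p | exists2 pi2, strategy2 pi2 & p = prob_safe F pi1 pi2 s]].

(* k-uniform selector: on S \ (T u W1), where T = S \ F and
   W1 = {s | val1_safe F s = 1}, all positive probabilities are i/j,
   0 <= i <= j <= k. *)
Definition k_uniform (F : {set S}) (k : nat) (xi : S -> M -> R) : Prop :=
  forall s, s \in F -> val1_safe F s != 1 ->
    forall a, 0 < xi s a ->
      exists i j : nat, (i <= j <= k)%N /\ xi s a = i%:R / j%:R.

End Games.

(* Main.v *)
Require Import Defs.
From HB Require Import structures.
From mathcomp Require Import all_boot all_order all_algebra.
From mathcomp Require Import classical_sets reals.
From mathcomp Require Import ring lra.
From mathcomp Require Import boolp functions topology normedtype function_spaces.
Import numFieldNormedType.Exports.
Import Order.TTheory GRing.Theory Num.Theory.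
Local Open Scope ring_scope.
Set Implicit Arguments. Unset Strict Implicit. Unset Printing Implicit Defensive.

Section K.
Local Open Scope classical_set_scope.
Variables (R : realType) (M : finType).
Definition PT := prod_topology (fun _ : M => (R : topologicalType)).
Lemma lin_cont (w : M -> R) (s : seq M) :
  continuous (fun q : PT => \sum_(a <- s) q a * w a : R).
Proof.
elim: s => [|a s IH].
  have -> : (fun q : PT => \sum_(a <- [::]) q a * w a : R) = cst 0.
    by apply: funext => q; rewrite big_nil.
  apply: (@cst_continuous PT R).
have -> : (fun q : PT => \sum_(b <- a :: s) q b * w b : R) =
   (fun q : PT => (q a * w a : R) + \sum_(b <- s) q b * w b).
  by apply: funext => q; rewrite big_cons.
move=> q.
have Hp : (fun q0 : PT => (q0 a : R)) @ q --> (q a : R).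
  exact: (@proj_continuous M (fun _ => (R : topologicalType)) a).
have H1 : (fun q0 : PT => (q0 a * w a : R)) @ q --> (q a * w a : R).
  exact: (@cvgM R PT (nbhs q) _ (fun q0 : PT => q0 a) (fun=> w a) (q a) (w a) Hp (cvg_cst _)).
exact: (@cvgD R R PT (nbhs q) _ _ _ _ _ H1 (IH q)).
Qed.

Lemma lin_compact (J : Type) (w : J -> M -> R) (c : J -> R) :
  (forall g, 0 < g -> exists p : M -> R, (forall a, 0 <= p a <= 1) /\
      forall j, c j - g <= \sum_(a : M) p a * w j a) ->
  exists p : M -> R, (forall a, 0 <= p a <= 1) /\
      forall j, c j <= \sum_(a : M) p a * w j a.
Proof.
move=> H.
pose K := [set f : PT | forall i, (`[(0:R), 1]%classic) (f i)].
have cK : compact K.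
  exact (@tychonoff M (fun _ => (R : topologicalType)) (fun _ => `[(0:R), 1]%classic) (fun _ => @segment_compact R 0 1)).
pose L j (f : PT) := \sum_(a : M) f a * w j a.
pose B g := [set f : PT | K f /\ forall j, c j - g <= L j f].
pose F := filter_from [set g : R | 0 < g] B.
have FF : Filter F.
  apply: filter_from_filter; first by exists 1; rewrite /= ltr01.
  move=> g1 g2 g10 g20; exists (Order.min g1 g2); first by rewrite /= lt_min g10.
  move=> f [Kf Hf]; split.
    split => // j; apply: le_trans (Hf j).
    by rewrite lerD2l lerN2 ge_min lexx.
  split => // j; apply: le_trans (Hf j).
  by rewrite lerD2l lerN2 ge_min lexx orbT.
have PF : ProperFilter F.
  apply: (filter_from_proper FF) => g g0.
  have [p [Hp1 Hp2]] := H g g0; exists p; split => // i.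
have FK : F K by exists 1; [rewrite /= ltr01 | move=> f []].
have [p [Kp clp]] := cK F PF FK.
exists p; split.
  by move=> a; have := Kp a; rewrite /= in_itv.
move=> j; rewrite leNgt; apply/negP => Hlt.
pose g := (c j - L j p) / 2.
have g0 : 0 < g by rewrite divr_gt0 // subr_gt0.
have FB : F (B g) by exists g.
have NU : nbhs p (L j @^-1` [set y | y < c j - g]).
  apply: (@lin_cont (w j) (index_enum M) p).
  apply: open_nbhs_nbhs; split; first exact: open_lt.
  rewrite /= /g; move: Hlt; rewrite -/(L j p) => Hlt; lra.
have [q [[_ Hq] Hq2]] := clp _ _ FB NU.
by have := Hq j; rewrite leNgt Hq2.
Qed.
End K.

Section G.
Variables (R : realType) (S M : finType) (G : cgs R S M) (F : {set S}).

Definition mu (c : S) (p : M -> R) (a2 : M) (t : S) : R :=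
  \sum_(a1 : M) p a1 * delta G c a1 a2 t.
Definition Ex (c : S) (p : M -> R) (a2 : M) (u : S -> R) : R :=
  \sum_(t : S) mu c p a2 t * u t.

Lemma distr_ge0 (T : finType) (A : {set T}) (p : T -> R) t :
  is_distr A p -> 0 <= p t.
Proof. by case=> H _; apply: H. Qed.
Lemma distr_out (T : finType) (A : {set T}) (p : T -> R) t :
  is_distr A p -> t \notin A -> p t = 0.
Proof. by case=> _ [H _]; apply: H. Qed.
Lemma distr_sum (T : finType) (A : {set T}) (p : T -> R) :
  is_distr A p -> \sum_t p t = 1.
Proof. by case=> _ [_ H]. Qed.
Lemma distr_le1 (T : finType) (A : {set T}) (p : T -> R) t :
  is_distr A p -> p t <= 1.
Proof.
move=> D; rewrite -(distr_sum D) (bigD1 t) //= lerDl.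
by apply: sumr_ge0 => i _; apply: distr_ge0 D.
Qed.

Lemma delta_ge0 c a1 a2 t : a1 \in Gam1 G c -> a2 \in Gam2 G c -> 0 <= delta G c a1 a2 t.
Proof. by move=> h1 h2; apply: distr_ge0 (delta_distr h1 h2). Qed.
Lemma delta_sum c a1 a2 : a1 \in Gam1 G c -> a2 \in Gam2 G c -> \sum_t delta G c a1 a2 t = 1.
Proof. by move=> h1 h2; apply: distr_sum (delta_distr h1 h2). Qed.

Lemma pdelta_ge0 c p a1 a2 t : is_distr (Gam1 G c) p -> a2 \in Gam2 G c ->
  0 <= p a1 * delta G c a1 a2 t.
Proof.
move=> D h2; case: (boolP (a1 \in Gam1 G c)) => h1.
  by apply: mulr_ge0; [apply: distr_ge0 D | apply: delta_ge0].
by rewrite (distr_out D h1) mul0r.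
Qed.

Lemma mu_ge0 c p a2 t : is_distr (Gam1 G c) p -> a2 \in Gam2 G c -> 0 <= mu c p a2 t.
Proof. by move=> D h2; apply: sumr_ge0 => a1 _; apply: pdelta_ge0. Qed.

Lemma mu_sum c p a2 : is_distr (Gam1 G c) p -> a2 \in Gam2 G c -> \sum_t mu c p a2 t = 1.
Proof.
move=> D h2; rewrite /mu exchange_big /= -(distr_sum D).
apply: eq_bigr => a1 _; rewrite -mulr_sumr.
case: (boolP (a1 \in Gam1 G c)) => h1; first by rewrite delta_sum ?mulr1.
by rewrite (distr_out D h1) !mul0r.
Qed.

Lemma mu_distr c p a2 : is_distr (Gam1 G c) p -> a2 \in Gam2 G c ->
  is_distr (finset.setTfor S) (mu c p a2).
Proof.
move=> D h2; split; first by move=> t; apply: mu_ge0.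
by split; [move=> t; rewrite finset.in_setT | apply: mu_sum].
Qed.

Lemma avg_le (mu0 : S -> R) (u u' : S -> R) :
  (forall t, 0 <= mu0 t) -> (forall t, u t <= u' t) ->
  \sum_t mu0 t * u t <= \sum_t mu0 t * u' t.
Proof. by move=> h1 h2; apply: ler_sum => t _; apply: ler_wpM2l. Qed.

Lemma avg_cst (mu0 : S -> R) (c : R) : \sum_t mu0 t = 1 -> \sum_t mu0 t * c = c.
Proof. by move=> h; rewrite -mulr_suml h mul1r. Qed.

Lemma avg_addc (mu0 : S -> R) (u : S -> R) (c : R) : \sum_t mu0 t = 1 ->
  \sum_t mu0 t * (u t + c) = \sum_t mu0 t * u t + c.
Proof.
by move=> h; under eq_bigr do rewrite mulrDr; rewrite big_split /= avg_cst.
Qed.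

Lemma step_sum c (p q : M -> R) (f : S -> R) :
  \sum_(a1 : M) \sum_(a2 : M) \sum_(t : S) p a1 * q a2 * delta G c a1 a2 t * f t
  = \sum_(a2 : M) q a2 * Ex c p a2 f.
Proof.
rewrite exchange_big /=; apply: eq_bigr => a2 _.
rewrite /Ex /mu mulr_sumr.
under [RHS]eq_bigr do rewrite mulr_suml mulr_sumr.
rewrite exchange_big /=; apply: eq_bigr => a1 _; apply: eq_bigr => t _.
by rewrite !mulrA [q a2 * _]mulrC.
Qed.

Lemma mix_le (T : finType) (A : {set T}) (q : T -> R) (g : T -> R) (b : R) :
  is_distr A q -> (forall a, a \in A -> g a <= b) -> \sum_a q a * g a <= b.
Proof.
move=> D h; rewrite -[b]mul1r -(distr_sum D) mulr_suml.
apply: ler_sum => a _; case: (boolP (a \in A)) => ha.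
  by apply: ler_wpM2l; [apply: distr_ge0 D | apply: h].
by rewrite (distr_out D ha) !mul0r.
Qed.

Lemma mix_ge (T : finType) (A : {set T}) (q : T -> R) (g : T -> R) (b : R) :
  is_distr A q -> (forall a, a \in A -> b <= g a) -> b <= \sum_a q a * g a.
Proof.
move=> D h; rewrite -[b]mul1r -(distr_sum D) mulr_suml.
apply: ler_sum => a _; case: (boolP (a \in A)) => ha.
  by apply: ler_wpM2l; [apply: distr_ge0 D | apply: h].
by rewrite (distr_out D ha) !mul0r.
Qed.

Lemma coef_ge0 c p q a1 a2 t : is_distr (Gam1 G c) p -> is_distr (Gam2 G c) q ->
  0 <= p a1 * q a2 * delta G c a1 a2 t.
Proof.
move=> Dp Dq; case: (boolP (a2 \in Gam2 G c)) => h2.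
  by rewrite mulrAC; apply: mulr_ge0; [apply: pdelta_ge0 | apply: distr_ge0 Dq].
by rewrite (distr_out Dq h2) mulr0 mul0r.
Qed.

Lemma Ex_le c p a2 u b : is_distr (Gam1 G c) p -> a2 \in Gam2 G c ->
  (forall t, u t <= b) -> Ex c p a2 u <= b.
Proof.
move=> D h2 hu; apply: (mix_le (mu_distr D h2)) => t _; exact: hu.
Qed.

Lemma Ex_ge c p a2 u b : is_distr (Gam1 G c) p -> a2 \in Gam2 G c ->
  (forall t, b <= u t) -> b <= Ex c p a2 u.
Proof.
move=> D h2 hu; apply: (mix_ge (mu_distr D h2)) => t _; exact: hu.
Qed.

Lemma Ex_mono c p a2 u u' : is_distr (Gam1 G c) p -> a2 \in Gam2 G c ->
  (forall t, u t <= u' t) -> Ex c p a2 u <= Ex c p a2 u'.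
Proof. move=> D h2 hu; apply: avg_le => // t; exact: mu_ge0. Qed.

Lemma Ex_addc c p a2 u b : is_distr (Gam1 G c) p -> a2 \in Gam2 G c ->
  Ex c p a2 (fun t => u t + b) = Ex c p a2 u + b.
Proof. by move=> D h2; apply: avg_addc; apply: mu_sum. Qed.

Lemma safeP_bounds pi1 pi2 n x xs : strategy1 G pi1 -> strategy2 G pi2 ->
  0 <= safeP G F pi1 pi2 n x xs <= 1.
Proof.
move=> S1 S2; elim: n xs => [|n IH] xs /=; case: ifP => // hc;
  rewrite ?lexx ?ler01 //.
have D1 := S1 x xs; have D2 := S2 x xs.
apply/andP; split.
  apply: sumr_ge0 => a1 _; apply: sumr_ge0 => a2 _; apply: sumr_ge0 => t _.
  by apply: mulr_ge0; [apply: coef_ge0 | case/andP: (IH (rcons xs t))].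
apply: (@le_trans _ _ (\sum_(a1 : M) \sum_(a2 : M) \sum_(t : S)
     pi1 (x :: xs) a1 * pi2 (x :: xs) a2 * delta G (last x xs) a1 a2 t * 1)).
  apply: ler_sum => a1 _; apply: ler_sum => a2 _; apply: ler_sum => t _.
  by apply: ler_wpM2l; [apply: coef_ge0 | case/andP: (IH (rcons xs t))].
rewrite step_sum; apply: (mix_le D2) => a2 h2.
by apply: (Ex_le D1 h2).
Qed.

Lemma memoryless_strategy xi : selector1 G xi -> strategy1 G (memoryless xi).
Proof. by move=> H x xs; apply: H. Qed.

Lemma cert xi u pi2 : selector1 G xi -> strategy2 G pi2 ->
  (forall t, t \notin F -> u t <= 0) -> (forall t, u t <= 1) ->
  (forall s a2, s \in F -> a2 \in Gam2 G s -> u s <= Ex s (xi s) a2 u) ->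
  forall n x xs, u (last x xs) <= safeP G F (memoryless xi) pi2 n x xs.
Proof.
move=> Sx S2 hout h1 hstep; elim=> [|n IH] x xs /=; case: ifP => hc.
- exact: h1.
- by apply: hout; rewrite hc.
- have D1 := Sx (last x xs); have D2 := S2 x xs.
  apply: (@le_trans _ _ (\sum_(a1 : M) \sum_(a2 : M) \sum_(t : S)
     xi (last x xs) a1 * pi2 (x :: xs) a2 * delta G (last x xs) a1 a2 t * u t)).
    rewrite step_sum; apply: (mix_ge D2) => a2 h2; exact: hstep.
  apply: ler_sum => a1 _; apply: ler_sum => a2 _; apply: ler_sum => t _.
  apply: ler_wpM2l; first by apply: coef_ge0.
  by have := IH x (rcons xs t); rewrite last_rcons.
- by apply: hout; rewrite hc.
Qed.

Lemma dirac_distr (T : finType) (A : {set T}) a : a \in A ->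
  is_distr A (fun b => if b == a then (1:R) else 0).
Proof.
move=> ha; split; first by move=> b; case: ifP => _; rewrite ?ler01 ?lexx.
split; first by move=> b hb; case: eqP => // e; rewrite e ha in hb.
by rewrite (bigD1 a) //= eqxx big1 ?addr0 // => b /negbTE ->.
Qed.

Lemma exists_distr1 s : exists p : M -> R, is_distr (Gam1 G s) p.
Proof.
have /set0Pn [a ha] := Gam1_nonempty G s.
by exists (fun b => if b == a then 1 else 0); apply: dirac_distr.
Qed.

Lemma exists_act2 s : exists a, a \in Gam2 G s.
Proof. by have /set0Pn [a ha] := Gam2_nonempty G s; exists a. Qed.

Definition Sset (u : S -> R) (s : S) : set R :=
  [set r | exists2 p, is_distr (Gam1 G s) p &
     forall a2, a2 \in Gam2 G s -> r <= Ex s p a2 u].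
Definition Pre (u : S -> R) (s : S) : R := if s \in F then sup (Sset u s) else 0.
Fixpoint W (n : nat) : S -> R :=
  match n with
  | 0 => fun t => if t \in F then 1 else 0
  | n'.+1 => Pre (W n')
  end.

Definition unit01 (u : S -> R) := forall t, 0 <= u t <= 1.

Lemma Sset_ne u s : unit01 u -> Sset u s 0.
Proof.
move=> hu; have [p D] := exists_distr1 s; exists p => // a2 h2.
by apply: (Ex_ge D h2) => t; case/andP: (hu t).
Qed.

Lemma Sset_ub u s r : unit01 u -> Sset u s r -> r <= 1.
Proof.
move=> hu [p D hp]; have [a2 h2] := exists_act2 s.
apply: le_trans (hp _ h2) _; apply: (Ex_le D h2) => t; by case/andP: (hu t).
Qed.

Lemma Sset_has_sup u s : unit01 u -> has_sup (Sset u s).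
Proof.
move=> hu; split; first by exists 0; apply: Sset_ne.
by exists 1 => r hr; apply: Sset_ub hr.
Qed.

Lemma Pre_bounds u s : unit01 u -> 0 <= Pre u s <= 1.
Proof.
move=> hu; rewrite /Pre; case: ifP => _; rewrite ?lexx ?ler01 //.
apply/andP; split.
  by apply: (ub_le_sup (Sset_has_sup s hu).2); apply: Sset_ne.
apply: ge_sup; first by exists 0; apply: Sset_ne.
by move=> r hr; apply: Sset_ub hr.
Qed.

Lemma Pre_mono u u' s : unit01 u -> unit01 u' -> (forall t, u t <= u' t) ->
  Pre u s <= Pre u' s.
Proof.
move=> hu hu' le; rewrite /Pre; case: ifP => // _.
apply: ge_sup; first by exists 0; apply: Sset_ne.
move=> r [p D hp]; apply: (ub_le_sup (Sset_has_sup s hu').2).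
exists p => // a2 h2; apply: le_trans (hp _ h2) _; exact: Ex_mono.
Qed.

Lemma W_unit n : unit01 (W n).
Proof.
elim: n => [|n IH] t /=; first by case: ifP; rewrite ?lexx ?ler01.
exact: Pre_bounds.
Qed.

Lemma W_out n t : t \notin F -> W n t = 0.
Proof. by case: n => [|n] /= /negbTE h; rewrite /Pre ?h. Qed.

Lemma W_decr n t : W n.+1 t <= W n t.
Proof.
elim: n t => [|n IH] t.
  rewrite [W 0 t]/=; case: ifP => h; first by case/andP: (W_unit 1 t).
  by rewrite W_out ?h.
exact: (Pre_mono t (W_unit n.+1) (W_unit n) IH).
Qed.

Lemma prob_safe_ge0 pi1 pi2 s : strategy1 G pi1 -> strategy2 G pi2 ->
  0 <= prob_safe G F pi1 pi2 s.
Proof.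
move=> S1 S2; apply: lb_le_inf; first by exists (safeP G F pi1 pi2 0 s [::]); exists 0%N.
by move=> y [n _ <-]; case/andP: (safeP_bounds n s [::] S1 S2).
Qed.

Lemma prob_safe_le pi1 pi2 s n : strategy1 G pi1 -> strategy2 G pi2 ->
  prob_safe G F pi1 pi2 s <= safeP G F pi1 pi2 n s [::].
Proof.
move=> S1 S2; apply: ge_inf; last by exists n.
exists 0 => y [m _ <-]; by case/andP: (safeP_bounds m s [::] S1 S2).
Qed.

Lemma upper pi1 N s0 : strategy1 G pi1 ->
  exists2 pi2, strategy2 G pi2 & safeP G F pi1 pi2 N s0 [::] <= W N s0.
Proof.
move=> S1.
have [aany _] := exists_act2 s0.
pose a0 (c : S) := odflt aany [pick a in Gam2 G c].
have a0P c : a0 c \in Gam2 G c.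
  rewrite /a0; case: pickP => //= h; have [a ha] := exists_act2 c.
  by rewrite h in ha.
pose amin c q r := [arg min_(a < a0 c | a \in Gam2 G c) Ex c q a (W r)]%O.
have aminP c q r : amin c q r \in Gam2 G c /\
    forall a, a \in Gam2 G c -> Ex c q (amin c q r) (W r) <= Ex c q a (W r).
  rewrite /amin; case: (Order.TotalTheory.arg_minP (fun a => Ex c q a (W r)) (a0P c)).
  by move=> i hi hmin; split.
pose pi2 (h : seq S) : M -> R := match h with
  | [::] => fun _ => 0
  | x :: xs => fun a => if a == amin (last x xs) (pi1 (x :: xs)) (N.-1 - size xs)%N
                         then 1 else 0 end.
have S2 : strategy2 G pi2.
  by move=> x xs; apply: dirac_distr; case: (aminP (last x xs) (pi1 (x :: xs)) (N.-1 - size xs)%N).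
exists pi2 => //.
suff H : forall r x xs, (size xs + r)%N = N ->
    safeP G F pi1 pi2 r x xs <= W r (last x xs).
  by apply: (H N s0 [::]).
elim=> [|r IH] x xs hsz /=; case: ifP => hc //.
set c := last x xs.
have hr : (N.-1 - size xs)%N = r by rewrite -hsz addnS /= addKn.
have D1 := S1 x xs.
set q := pi1 (x :: xs).
apply: (@le_trans _ _ (\sum_(a1 : M) \sum_(a2 : M) \sum_(t : S)
     q a1 * pi2 (x :: xs) a2 * delta G c a1 a2 t * W r t)).
  apply: ler_sum => a1 _; apply: ler_sum => a2 _; apply: ler_sum => t _.
  apply: ler_wpM2l; first by apply: (coef_ge0 _ _ _ D1 (S2 x xs)).
  have := IH x (rcons xs t); rewrite last_rcons size_rcons addSnnS; by move=> /(_ hsz).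
rewrite step_sum /= hr.
rewrite (bigD1 (amin c q r)) //=.
rewrite eqxx mul1r big1 ?addr0; last by move=> a /negbTE ->; rewrite mul0r.
rewrite /Pre hc; apply: (ub_le_sup (Sset_has_sup c (W_unit r)).2).
exists q => // a2 h2; by case: (aminP c q r) => _; apply.
by case/andP: (Pre_bounds (last x xs) (W_unit r)).
Qed.

Lemma val1_le_W N s : val1_safe G F s <= W N s.
Proof.
have [xi0 hxi0] := fin_all_exists exists_distr1.
have S10 : strategy1 G (memoryless xi0) by move=> x xs; apply: hxi0.
rewrite /val1_safe; apply: ge_sup.
  by exists (inf [set p | exists2 pi2, strategy2 G pi2 &
         p = prob_safe G F (memoryless xi0) pi2 s]); exists (memoryless xi0).
move=> v [pi1 S1 ->].
have [pi2 S2 hle] := upper N s S1.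
apply: le_trans hle; apply: le_trans (prob_safe_le s N S1 S2).
apply: ge_inf; last by exists pi2.
by exists 0 => y [pi2' S2' ->]; apply: prob_safe_ge0.
Qed.

Definition v (s : S) : R := inf (range (fun n => W n s)).

Lemma v_le_W n s : v s <= W n s.
Proof.
apply: ge_inf; last by exists n.
by exists 0 => y [m _ <-]; case/andP: (W_unit m s).
Qed.

Lemma v_ge0 s : 0 <= v s.
Proof.
apply: lb_le_inf; first by exists (W 0 s), 0%N.
by move=> y [m _ <-]; case/andP: (W_unit m s).
Qed.

Lemma v_unit : unit01 v.
Proof.
move=> t; rewrite v_ge0 /=; apply: le_trans (v_le_W 0 t) _.
by case/andP: (W_unit 0 t).
Qed.

Lemma v_out t : t \notin F -> v t = 0.
Proof.
move=> h; apply/eqP; rewrite eq_le v_ge0 andbT.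
by have := v_le_W 0 t; rewrite W_out.
Qed.

Lemma val1_le_v s : val1_safe G F s <= v s.
Proof.
apply: lb_le_inf; first by exists (W 0 s), 0%N.
by move=> y [m _ <-]; apply: val1_le_W.
Qed.

Lemma W_mono_n m n t : (m <= n)%N -> W n t <= W m t.
Proof.
elim: n => [|n IH]; first by rewrite leqn0 => /eqP ->.
rewrite leq_eqVlt => /orP [/eqP -> //|]; rewrite ltnS => hm.
exact: le_trans (W_decr n t) (IH hm).
Qed.

Lemma approx g : 0 < g -> exists N, forall t, W N t <= v t + g.
Proof.
move=> g0.
have H : forall t, exists n : nat, W n t <= v t + g.
  move=> t; have : inf (range (fun n => W n t)) < v t + g by rewrite /v ltrDl.
  move/inf_lt => /(_ (ex_intro _ (W 0 t) (ex_intro2 _ _ 0%N I erefl))) [y [n _ <-] hy].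
  by exists n; apply: ltW.
have [Nf hN] := fin_all_exists H.
exists (\max_t Nf t)%N => t; apply: le_trans (hN t).
by apply: W_mono_n; apply: leq_bigmax.
Qed.

Lemma near_opt s g : 0 < g -> exists p, is_distr (Gam1 G s) p /\
  forall a2, a2 \in Gam2 G s -> v s - g <= Ex s p a2 v.
Proof.
move=> g0; case: (boolP (s \in F)) => hs; last first.
  have [p D] := exists_distr1 s; exists p; split => // a2 h2.
  rewrite v_out // sub0r; apply: le_trans (Ex_ge D h2 (fun t => (v_ge0 t))).
  by rewrite lerNl oppr0 ltW.
have g20 : 0 < g / 2 by rewrite divr_gt0.
have [N hN] := approx g20.
have hv : v s <= sup (Sset (W N) s) by have := v_le_W N.+1 s; rewrite /= /Pre hs.
have [r [p D hp] hr] := sup_adherent g20 (Sset_has_sup s (W_unit N)).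
exists p; split => // a2 h2.
have h1 := hp a2 h2.
have h3 : Ex s p a2 (W N) <= Ex s p a2 v + g / 2.
  by rewrite -Ex_addc //; apply: Ex_mono.
have e : g = g / 2 + g / 2 by rewrite -splitr.
rewrite {1}e; lra.
Qed.

Lemma opt_exists s : exists p, is_distr (Gam1 G s) p /\
  forall a2, a2 \in Gam2 G s -> v s <= Ex s p a2 v.
Proof.
pose J := ((bool + M) + M)%type.
pose w (j : J) : M -> R := match j with
  | inl (inl true) => fun _ => 1
  | inl (inl false) => fun _ => -1
  | inl (inr a) => fun b => if b == a then -1 else 0
  | inr a2 => fun a1 => if a2 \in Gam2 G s then \sum_t delta G s a1 a2 t * v t else 0
  end.
pose c (j : J) : R := match j with
  | inl (inl true) => 1
  | inl (inl false) => -1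
  | inl (inr a) => if a \in Gam1 G s then -1 else 0
  | inr a2 => if a2 \in Gam2 G s then v s else 0
  end.
have sum1 (p : M -> R) (k : R) : \sum_b p b * (fun _ => k) b = (\sum_b p b) * k.
  by rewrite mulr_suml.
have sumd (p : M -> R) a : \sum_b p b * (if b == a then -1 else 0) = - p a.
  rewrite (bigD1 a) //= eqxx mulrN1 big1 ?addr0 // => b /negbTE ->.
  by rewrite mulr0.
have Exl p a2 : Ex s p a2 v = \sum_a1 p a1 * \sum_t delta G s a1 a2 t * v t.
  rewrite /Ex /mu; under eq_bigr do rewrite mulr_suml.
  rewrite exchange_big /=; apply: eq_bigr => a1 _; rewrite mulr_sumr.
  by apply: eq_bigr => t _; rewrite mulrA.
have H : forall g, 0 < g -> exists p : M -> R, (forall a, 0 <= p a <= 1) /\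
      forall j, c j - g <= \sum_a p a * w j a.
  move=> g g0; have [p [D hp]] := near_opt s g0.
  exists p; split; first by move=> a; rewrite (distr_ge0 a D) (distr_le1 a D).
  have gn : - g <= 0 by rewrite lerNl oppr0 ltW.
  case=> [[[]|a]|a2] /=.
  - by rewrite sum1 (distr_sum D) mulr1 gerBl ltW.
  - by rewrite sum1 (distr_sum D) mulrN1 gerBl ltW.
  - rewrite sumd; case: ifP => ha.
      by have := distr_le1 a D; lra.
    by rewrite (distr_out D (negbT ha)) oppr0 sub0r.
  - case: ifP => h2; last by rewrite big1 ?sub0r // => a _; rewrite mulr0.
    by rewrite -Exl; apply: hp.
have [p [box hc]] := lin_compact H.
have D : is_distr (Gam1 G s) p.
  split; first by move=> a; case/andP: (box a).
  split.
    move=> a ha; have := hc (inl (inr a)); rewrite /= sumd (negbTE ha).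
    by case/andP: (box a) => h0 _; lra.
  have h1 := hc (inl (inl true)); have h2 := hc (inl (inl false)).
  rewrite /= sum1 mulr1 in h1; rewrite /= sum1 mulrN1 in h2; lra.
exists p; split => // a2 h2; rewrite Exl.
by have := hc (inr a2); rewrite /= h2.
Qed.

Lemma sum_lin3 (mu1 v0 : S -> R) (e : R) : \sum_t mu1 t = 1 ->
  \sum_t mu1 t * (v0 t - e + e * v0 t ^+ 2) =
  \sum_t mu1 t * v0 t - e + e * \sum_t mu1 t * v0 t ^+ 2.
Proof.
move=> h1.
have E t : mu1 t * (v0 t - e + e * v0 t ^+ 2) =
   mu1 t * v0 t + (- (e * mu1 t)) + e * (mu1 t * v0 t ^+ 2) by ring.
under eq_bigr do rewrite E.
by rewrite !big_split /= sumrN -!mulr_sumr h1 mulr1.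
Qed.

Lemma var_id (mu1 v0 : S -> R) : \sum_t mu1 t = 1 ->
  \sum_t mu1 t * (v0 t - \sum_t mu1 t * v0 t) ^+ 2 =
  \sum_t mu1 t * v0 t ^+ 2 - (\sum_t mu1 t * v0 t) ^+ 2.
Proof.
move=> h1; set m := \sum_t mu1 t * v0 t.
have E t : mu1 t * (v0 t - m) ^+ 2 =
   mu1 t * v0 t ^+ 2 + (- (2 * m) * (mu1 t * v0 t)) + (m ^+ 2 * mu1 t) by ring.
under eq_bigr do rewrite E.
rewrite !big_split /= -!mulr_sumr h1 -/m; ring.
Qed.

Lemma core (mu1 mus v0 : S -> R) (vs e gap mumin : R) :
  0 < e -> e <= 1 -> (forall t, 0 <= v0 t <= 1) -> 0 <= vs ->
  (forall t, 0 <= mu1 t) -> \sum_t mu1 t = 1 ->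
  (forall t, 0 <= mus t) -> \sum_t mus t = 1 ->
  (forall t, mus t = 0 -> mu1 t = 0) -> (forall t, mus t / 2 <= mu1 t) ->
  vs <= \sum_t mus t * v0 t ->
  (forall t, 0 < mus t -> mumin <= mus t) ->
  (forall t t', v0 t != v0 t' -> gap <= `|v0 t - v0 t'|) -> 0 < gap -> 0 < mumin ->
  3 * (\sum_t mus t * v0 t - \sum_t mu1 t * v0 t) <= e * (mumin * gap ^+ 2 / 4) ->
  vs - e + e * vs ^+ 2 <= \sum_t mu1 t * (v0 t - e + e * v0 t ^+ 2).
Proof.
move=> e0 e1 hv vs0 m1p m1s msp mss hz hhalf hopt hmin hgap gap0 mumin0 hdiff.
rewrite sum_lin3 //.
set m := \sum_t mu1 t * v0 t; set q := \sum_t mu1 t * v0 t ^+ 2.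
set ms := \sum_t mus t * v0 t.
have m01 : 0 <= m <= 1.
  apply/andP; split; first by apply: sumr_ge0 => t _; apply: mulr_ge0 => //; case/andP: (hv t).
  rewrite -m1s; apply: ler_sum => t _; rewrite -[X in _ <= X]mulr1; apply: ler_wpM2l => //.
  by case/andP: (hv t).
have hvar : m ^+ 2 <= q.
  rewrite -subr_ge0 -var_id //; apply: sumr_ge0 => t _; apply: mulr_ge0 => //.
  exact: sqr_ge0.
have [[t1 [t2 [h1 [h2 hne]]]] | hno] :=
  pselect (exists t1 t2, 0 < mus t1 /\ 0 < mus t2 /\ v0 t1 != v0 t2).
- have ht : t2 != t1 by apply: contraNneq hne => ->.
  have hV : mumin * gap ^+ 2 / 4 <= q - m ^+ 2.
    rewrite -var_id // -/m (bigD1 t1) //= (bigD1 t2) /=; last by rewrite ht.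
    set rest := \sum_(i | (i != t1) && (i != t2)) _.
    have r0 : 0 <= rest by apply: sumr_ge0 => t _; apply: mulr_ge0; [exact: m1p | exact: sqr_ge0].
    have a1 : mumin / 2 <= mu1 t1 by have := hmin t1 h1; have := hhalf t1; lra.
    have a2 : mumin / 2 <= mu1 t2 by have := hmin t2 h2; have := hhalf t2; lra.
    have hg := hgap _ _ hne.
    have hg2 : gap ^+ 2 <= (v0 t1 - v0 t2) ^+ 2.
      rewrite -(real_normK (num_real (v0 t1 - v0 t2))) !expr2; apply: ler_pM => //; exact: ltW gap0.
    set x1 := (v0 t1 - m) ^+ 2; set x2 := (v0 t2 - m) ^+ 2.
    have x10 : 0 <= x1 by apply: sqr_ge0.
    have x20 : 0 <= x2 by apply: sqr_ge0.
    have hx : (v0 t1 - v0 t2) ^+ 2 <= 2 * (x1 + x2).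
      rewrite /x1 /x2; have := sqr_ge0 (v0 t1 + v0 t2 - 2 * m); nra.
    nra.
  have vsm : vs <= ms by [].
  case: (lerP vs m) => hvm.
    have : vs ^+ 2 <= m ^+ 2 by rewrite ler_sqr ?nnegrE //; case/andP: m01.
    nra.
  case/andP: m01 => m0 m1.
  have ms1 : ms <= 1.
    rewrite /ms -mss; apply: ler_sum => t _; rewrite -[X in _ <= X]mulr1; apply: ler_wpM2l => //.
    by case/andP: (hv t).
  have hq : e * (mumin * gap ^+ 2 / 4) <= e * (q - m ^+ 2) by rewrite ler_wpM2l // ltW.
  have hem : e * (vs + m) <= 2.
    have : vs + m <= 2 by lra.
    move=> h; apply: le_trans (_ : 1 * 2 <= 2); last by rewrite mul1r.
    apply: ler_pM => //; [exact: ltW | lra].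
  have hsq : e * (vs ^+ 2 - m ^+ 2) <= 2 * (vs - m).
    have -> : e * (vs ^+ 2 - m ^+ 2) = (vs - m) * (e * (vs + m)) by ring.
    rewrite mulrC; apply: ler_wpM2r; lra.
  have : e * vs ^+ 2 - e * m ^+ 2 <= 2 * (vs - m) by rewrite -mulrBr.
  move=> hlast; have hd : 3 * (ms - m) <= e * (mumin * gap ^+ 2 / 4) by exact: hdiff.
  lra.
- have [t0 h0] : exists t0, 0 < mus t0.
    apply/not_existsP => hn.
    have : \sum_t mus t <= 0.
      apply: sumr_le0 => t _; rewrite leNgt; apply/negP => ht; apply: (hn t); exact: ht.
    by rewrite mss ler10.
  have hc t : mus t = 0 \/ v0 t = v0 t0.
    have := msp t; rewrite le_eqVlt => /orP [/eqP <-|ht]; first by left.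
    right; apply/eqP; apply: contra_notT hno => hn.
    by exists t, t0; split => //; split => //; rewrite eq_sym.
  have Em (k : S -> R) (f : R -> R) : (forall t, mus t = 0 -> k t = 0) ->
      \sum_t k t * f (v0 t) = \sum_t k t * f (v0 t0).
    move=> hk; apply: eq_bigr => t _; case: (hc t) => [/hk -> | ->]; first by rewrite !mul0r.
    by [].
  have -> : m = v0 t0.
    rewrite /m (Em mu1 id) //= -mulr_suml m1s mul1r //.
  have -> : q = v0 t0 ^+ 2.
    rewrite /q (Em mu1 (fun x => x ^+ 2)) // -mulr_suml m1s mul1r //.
  have hms : ms = v0 t0.
    rewrite /ms (Em mus id) //= -mulr_suml mss mul1r //.
  have : vs <= v0 t0 by rewrite -hms.
  move=> h; have : vs ^+ 2 <= v0 t0 ^+ 2 by rewrite ler_sqr ?nnegrE //; apply: le_trans h.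
  nra.
Qed.

Lemma pos_lb (X : finType) (P : pred X) (f : X -> R) :
  (forall x, P x -> 0 < f x) -> exists2 c, 0 < c & forall x, P x -> c <= f x.
Proof.
move=> hf; pose D := 1 + \sum_(x | P x) (f x)^-1.
have s0 : 0 <= \sum_(x | P x) (f x)^-1.
  by apply: sumr_ge0 => x hx; rewrite invr_ge0 ltW // hf.
have D0 : 0 < D by rewrite /D; lra.
exists D^-1; first by rewrite invr_gt0.
move=> x hx; have fx := hf x hx.
have h : (f x)^-1 <= D.
  rewrite /D (bigD1 x) //=.
  have : 0 <= \sum_(y | P y && (y != x)) (f y)^-1.
    by apply: sumr_ge0 => y /andP [hy _]; rewrite invr_ge0 ltW // hf.
  lra.
rewrite -(invrK (f x)) lef_pV2 ?posrE ?invr_gt0 //.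
Qed.

Lemma Ex_lin s p a2 u : Ex s p a2 u = \sum_a1 p a1 * \sum_t delta G s a1 a2 t * u t.
Proof.
rewrite /Ex /mu; under eq_bigr do rewrite mulr_suml.
rewrite exchange_big /=; apply: eq_bigr => a1 _; rewrite mulr_sumr.
by apply: eq_bigr => t _; rewrite mulrA.
Qed.

End G.

Section G2.
Variables (R : realType) (S M : finType) (G : cgs R S M) (F : {set S}).

Lemma main_e e : 0 < e -> e <= 1 ->
  exists (k : nat) (xi : S -> M -> R), (0 < k)%N /\ selector1 G xi /\ k_uniform G F k xi /\
    forall s pi2, strategy2 G pi2 -> val1_safe G F s - e <= prob_safe G F (memoryless xi) pi2 s.
Proof.
move=> e0 e1.
set vv := v G F.
have [ps hps] := fin_all_exists (opt_exists G F).
have D s : is_distr (Gam1 G s) (ps s) := (hps s).1.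
have [pmin pmin0 hpmin] := @pos_lb R _ (fun x : S * M => 0 < ps x.1 x.2)
   (fun x => ps x.1 x.2) (fun x h => h).
have [mumin mumin0 hmumin] := @pos_lb R _
   (fun x : S * M * S => (x.1.2 \in Gam2 G x.1.1) && (0 < mu G x.1.1 (ps x.1.1) x.1.2 x.2))
   (fun x => mu G x.1.1 (ps x.1.1) x.1.2 x.2) (fun x h => (andP h).2).
have [gap gap0 hgap] := @pos_lb R _ (fun x : S * S => vv x.1 != vv x.2)
   (fun x => `|vv x.1 - vv x.2|) (fun x h => ltac:(by rewrite normr_gt0 subr_eq0)).
have A0 : 0 < e * mumin * gap ^+ 2 by rewrite !mulr_gt0 // exprn_gt0.
pose Mc : R := #|M|%:R.
have Mc0 : 0 <= Mc by rewrite /Mc ler0n.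
pose x0 := 2 / pmin + 12 * Mc / (e * mumin * gap ^+ 2).
pose K := (Num.trunc x0).+1.
pose KK : R := K%:R.
have hK : x0 < KK := truncnS_gt x0.
have t1 : 0 <= 2 / pmin by rewrite divr_ge0 // ltW.
have t2 : 0 <= 12 * Mc / (e * mumin * gap ^+ 2) by rewrite divr_ge0 ?mulr_ge0 // ltW.
have KK0 : 0 < KK by rewrite /KK ltr0n.
have hK1 : 2 <= KK * pmin by rewrite -ler_pdivrMr //; rewrite /x0 in hK; lra.
have hK2 : 12 * Mc <= KK * (e * mumin * gap ^+ 2).
  by rewrite -ler_pdivrMr //; rewrite /x0 in hK; lra.
pose n s a := Num.trunc (KK * ps s a).
pose N s := (\sum_b n s b)%N.
pose xi s a : R := (n s a)%:R / (N s)%:R.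
have hn1 s a : (n s a)%:R <= KK * ps s a.
  by rewrite /n truncn_le; apply: mulr_ge0; [apply: ltW | apply: (distr_ge0 a (D s))].
have hn2 s a : KK * ps s a - 1 < (n s a)%:R.
  by have := truncnS_gt (KK * ps s a); rewrite -/(n s a) -addn1 natrD; lra.
have hN1 s : (N s)%:R <= KK.
  rewrite /N natr_sum; apply: le_trans (ler_sum _ (fun a _ => hn1 s a)) _.
  by rewrite -mulr_sumr (distr_sum (D s)) mulr1.
have hNn s a : (n s a <= N s)%N.
  by rewrite /N (bigD1 a) //= leq_addr.
have hN0 s : (0 < N s)%N.
  have [a ha] : exists a, 0 < ps s a.
    apply/not_existsP => hn.
    have : \sum_a ps s a <= 0.
      by apply: sumr_le0 => a _; rewrite leNgt; apply/negP => ha; apply: (hn a).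
    by rewrite (distr_sum (D s)) ler10.
  have hp := hpmin (s, a) ha; rewrite /= in hp.
  have : 1 < (n s a)%:R :> R.
    have h1 := hn2 s a; have h2 : KK * pmin <= KK * ps s a by rewrite ler_wpM2l // ltW.
    lra.
  rewrite ltr1n => h1; apply: leq_trans (hNn s a); exact: ltnW.
have hNR s : 0 < (N s)%:R :> R by rewrite ltr0n.
have hxi_ge0 s a : 0 <= xi s a by rewrite /xi divr_ge0.
have hxi0 s a : ps s a = 0 -> xi s a = 0.
  by move=> h; rewrite /xi /n h mulr0 (_ : Num.trunc 0 = 0%N) ?mul0r // truncn0.
have hxi_ge s a : ps s a - 1 / KK <= xi s a.
  have e1' : ps s a - 1 / KK = (KK * ps s a - 1) / KK by field; rewrite lt0r_neq0.
  rewrite e1'; apply: (@le_trans _ _ ((n s a)%:R / KK)).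
    by rewrite ler_pM2r ?invr_gt0 //; apply: ltW; apply: hn2.
  rewrite /xi; apply: ler_wpM2l; first by rewrite ler0n.
  by rewrite lef_pV2 ?posrE.
have hinvK : 1 / KK <= pmin / 2.
  rewrite ler_pdivrMr //; rewrite mulrAC; rewrite ler_pdivlMr //; lra.
have hxi_half s a : ps s a / 2 <= xi s a.
  have := distr_ge0 a (D s); rewrite le_eqVlt => /orP [/eqP h|h].
    by rewrite -h mul0r hxi_ge0.
  have := hpmin (s, a) h; have := hxi_ge s a; rewrite /=; lra.
have Dxi s : is_distr (Gam1 G s) (xi s).
  split; first exact: hxi_ge0.
  split; first by move=> a ha; apply: hxi0; apply: distr_out (D s) ha.
  rewrite /xi -mulr_suml -natr_sum divff //; apply: lt0r_neq0; exact: hNR.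
have Sxi : selector1 G xi by [].
pose u t := vv t - e + e * vv t ^+ 2.
have vvu := v_unit G F.
have hu1 t : u t <= 1.
  have [h0 h1] := andP (vvu t).
  have : vv t ^+ 2 <= 1 by rewrite expr_le1.
  rewrite /u; nra.
have hu0 t : t \notin F -> u t <= 0.
  move=> h; rewrite /u /vv v_out // expr0n /= mulr0 addr0 sub0r.
  by rewrite lerNl oppr0 ltW.
have hstep s a2 : s \in F -> a2 \in Gam2 G s -> u s <= Ex G s (xi s) a2 u.
  move=> hs h2.
  have Dm := mu_distr (D s) h2.
  have Dx := mu_distr (Dxi s) h2.
  apply: (@core R S (mu G s (xi s) a2) (mu G s (ps s) a2) vv (vv s) e gap mumin) => //.
  - by rewrite /vv v_ge0.
  - by move=> t; apply: mu_ge0.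
  - exact: mu_sum.
  - by move=> t; apply: mu_ge0.
  - exact: mu_sum.
  - move=> t hz.
    have hz' := psumr_eq0P (fun a _ => pdelta_ge0 a t (D s) h2) hz.
    apply: big1 => a _.
    have := distr_ge0 a (D s); rewrite le_eqVlt => /orP [/eqP h|h].
      by rewrite hxi0 ?mul0r.
    have := hz' a isT; move/eqP; rewrite mulf_eq0 (gt_eqF h) /= => /eqP ->.
    by rewrite mulr0.
  - move=> t; rewrite /mu mulr_suml; apply: ler_sum => a _.
    case: (boolP (a \in Gam1 G s)) => ha.
      rewrite mulrAC; apply: ler_wpM2r; first by apply: delta_ge0.
      exact: hxi_half.
    by rewrite (distr_out (D s) ha) (hxi0 _ _ (distr_out (D s) ha)) !mul0r.
  - by have := (hps s).2 a2 h2.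
  - by move=> t ht; apply: (hmumin (s, a2, t)); rewrite /= h2 ht.
  - by move=> t t' ht; apply: (hgap (t, t')).
  - have -> : \sum_t mu G s (ps s) a2 t * vv t - \sum_t mu G s (xi s) a2 t * vv t
       = \sum_a (ps s a - xi s a) * \sum_t delta G s a a2 t * vv t.
      rewrite -!/(Ex G s _ a2 vv) !Ex_lin -sumrB; apply: eq_bigr => a _.
      by rewrite mulrBl.
    have hb : \sum_a (ps s a - xi s a) * \sum_t delta G s a a2 t * vv t <= Mc * (1 / KK).
      apply: (@le_trans _ _ (\sum_(a : M) (1 / KK))); last by rewrite sumr_const /Mc mulr_natl.
      apply: ler_sum => a _.
      case: (boolP (a \in Gam1 G s)) => ha; last first.
        by rewrite (distr_out (D s) ha) (hxi0 _ _ (distr_out (D s) ha)) subrr mul0r divr_ge0.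
      have Dd := delta_distr ha h2.
      have h0 : 0 <= \sum_t delta G s a a2 t * vv t.
        by apply: (mix_ge Dd) => t _; apply: v_ge0.
      have h1 : \sum_t delta G s a a2 t * vv t <= 1.
        by apply: (mix_le Dd) => t _; case/andP: (vvu t).
      have := hxi_ge s a; set d := ps s a - xi s a; move=> hd.
      case: (lerP d 0) => hd0.
        by apply: le_trans (_ : d * _ <= 0) (divr_ge0 _ _); [rewrite mulr_le0_ge0 | | apply: ltW].
      apply: le_trans (_ : d * _ <= d * 1) _; first by rewrite ler_wpM2l // ltW.
      rewrite mulr1 /d; lra.
    have : Mc * (1 / KK) <= e * mumin * gap ^+ 2 / 12.
      rewrite mulrA ler_pdivrMr // [X in _ <= X]mulrAC ler_pdivlMr //.
      by rewrite mulrC; lra.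
    lra.
exists K, xi; split => //; split => //; split.
  move=> s hs _ a ha; exists (n s a), (N s); split => //.
  rewrite hNn /=; rewrite -(ler_nat R); exact: hN1.
move=> s pi2 S2.
have hc := cert Sxi S2 hu0 hu1 hstep.
apply: (@le_trans _ _ (u s)).
  have := val1_le_v G F s; rewrite /u -/vv.
  have : 0 <= e * vv s ^+ 2 by apply: mulr_ge0; [exact: ltW | exact: sqr_ge0].
  lra.
apply: lb_le_inf.
  by exists (safeP G F (memoryless xi) pi2 0 s [::]), 0%N.
by move=> y [m _ <-]; apply: (hc m s [::]).
Qed.
End G2.

Unset Implicit Arguments.

Theorem lemma15 (R : realType) (S M : finType) (G : cgs R S M)
    (F : {set S}) (eps : R) :
  0 < eps ->
  exists (k : nat) (xi : S -> M -> R),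
    (0 < k)%N /\ selector1 G xi /\ k_uniform G F k xi /\
    forall (s : S) (pi2 : seq S -> M -> R), strategy2 G pi2 ->
      prob_safe G F (memoryless xi) pi2 s >= val1_safe G F s - eps.
Proof.
move=> eps0.
pose e := Order.min eps 1.
have e0 : 0 < e by rewrite /e lt_min eps0 ltr01.
have e1 : e <= 1 by rewrite /e ge_min lexx orbT.
have ee : e <= eps by rewrite /e ge_min lexx.
have [k [xi [k0 [Sx [ku H]]]]] := @main_e R S M G F e e0 e1.
exists k, xi; split => //; split => //; split => // s pi2 S2.
apply: le_trans (H s pi2 S2); lra.
Qed.
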